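(* For all $q\in Q$, $\overline p'(q)<0$.
   Context: Let $0<q_\ell<q_h<\infty$, $Q=[q_\ell,q_h]$, and let $c$ be a real number with $0<c<q_\ell$. Let $F$ be a probability distribution on $[0,1]$ with support $[0,1]$ admitting a twice continuously differentiable density $f:(0,1)\to\mathbb{R}_{>0}$. Define $r(v)=(1-F(v))/f(v)$ and $\psi(v)=v-r(v)$ on $(0,1)$, and assume $\psi'(v)>0$ whenever $\psi(v)>0$. For $q\in Q$, $p(q)$ is the unique maximizer over $p\in\mathbb{R}$ of $(p-c)\big(1-F(p/q)\big)$, and $\overline p(q)=p(q)/q$. *)

(* Defs.v *)
From Stdlib Require Import Reals.
From Coquelicot Require Import Coquelicot.
Open Scope R_scope.

Definition profit (F : R -> R) (c q p : R) : R := (p - c) * (1 - F (p / q)).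

Definition unique_maximizer (F : R -> R) (c q p : R) : Prop :=
  (forall p', profit F c q p' <= profit F c q p) /\
  (forall p', (forall p'', profit F c q p'' <= profit F c q p') -> p' = p).

Definition r_fun (F f : R -> R) (v : R) : R := (1 - F v) / f v.
Definition psi (F f : R -> R) (v : R) : R := v - r_fun F f v.

Definition cdf_with_C2_density (F f : R -> R) : Prop :=
  (forall x, x <= 0 -> F x = 0) /\
  (forall x, 1 <= x -> F x = 1) /\
  (forall x, continuous F x) /\
  (forall v, 0 < v < 1 -> is_derive F v (f v)) /\
  (forall v, 0 < v < 1 -> 0 < f v) /\
  (forall v, 0 < v < 1 ->
     ex_derive f v /\ ex_derive (Derive f) v /\ continuous (Derive_n f 2) v).

(* Main.v *)
Require Import Defs.
From Stdlib Require Import Reals Lra.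
From Coquelicot Require Import Coquelicot.
Open Scope R_scope.

Lemma my_MVT (g d : R -> R) (a b : R) : a < b ->
  (forall x, a < x < b -> is_derive g x (d x)) ->
  (forall x, a <= x <= b -> continuity_pt g x) ->
  exists c0, a < c0 < b /\ g b - g a = d c0 * (b - a).
Proof.
  intros Hab Hd Hc.
  assert (pr1 : forall c0, a < c0 < b -> derivable_pt g c0).
  { intros c0 Hc0. apply ex_derive_Reals_0. eexists. apply Hd; exact Hc0. }
  assert (pr2 : forall c0, a < c0 < b -> derivable_pt id c0).
  { intros. apply derivable_pt_id. }
  destruct (MVT g id a b pr1 pr2 Hab Hc) as [c0 [P HP]].
  { intros; apply derivable_continuous_pt, derivable_pt_id. }
  exists c0; split; [exact P|].
  rewrite (derive_pt_eq_0 g c0 (d c0) (pr1 c0 P)) in HP.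
  2:{ apply is_derive_Reals, Hd, P. }
  rewrite (derive_pt_eq_0 id c0 1 (pr2 c0 P)) in HP.
  2:{ apply derivable_pt_lim_id. }
  unfold id in HP. lra.
Qed.

Lemma F_lt1 F f v : cdf_with_C2_density F f -> 0 < v < 1 -> F v < 1.
Proof.
  intros [HF0 [HF1 [HFc [HFd [Hfpos _]]]]] Hv.
  destruct (my_MVT F f v 1) as [c0 [Hc0 Heq]]; try lra.
  - intros x Hx; apply HFd; lra.
  - intros x _; apply continuity_pt_filterlim, HFc.
  - rewrite HF1 in Heq by lra.
    assert (0 < f c0) by (apply Hfpos; lra).
    assert (0 < f c0 * (1 - v)) by (apply Rmult_lt_0_compat; lra). lra.
Qed.

Lemma LP (g : R -> R) x l : is_derive g x l -> 0 < l ->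
  exists d, 0 < d /\ forall h, 0 < h < d -> g x < g (x + h) /\ g (x - h) < g x.
Proof.
  intros Hd Hl. apply is_derive_Reals in Hd.
  destruct (Hd (l/2)) as [d Hdd]; [lra|].
  exists d; split; [apply cond_pos|]. intros h Hh.
  assert (A := Hdd h ltac:(lra) ltac:(rewrite Rabs_pos_eq; lra)).
  assert (B := Hdd (-h) ltac:(lra) ltac:(rewrite Rabs_Ropp, Rabs_pos_eq; lra)).
  apply Rabs_def2 in A. apply Rabs_def2 in B. destruct A as [A1 A2], B as [B1 B2].
  split.
  - assert (0 < (g (x + h) - g x) / h) by lra.
    assert (0 < (g (x + h) - g x) / h * h) by (apply Rmult_lt_0_compat; lra).
    replace ((g (x + h) - g x) / h * h) with (g (x + h) - g x) in H0 by (field; lra). lra.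
  - assert (0 < (g (x + - h) - g x) / - h) by lra.
    assert (0 < (g (x + - h) - g x) / - h * h) by (apply Rmult_lt_0_compat; lra).
    replace ((g (x + - h) - g x) / - h * h) with (- (g (x + - h) - g x)) in H0 by (field; lra).
    replace (x - h) with (x + - h) by ring. lra.
Qed.

Lemma psi_ex F f v : cdf_with_C2_density F f -> 0 < v < 1 -> ex_derive (psi F f) v.
Proof.
  intros [HF0 [HF1 [HFc [HFd [Hfpos Hf2]]]]] Hv.
  unfold psi, r_fun.
  apply (ex_derive_minus (fun y => y) (fun y => (1 - F y) / f y)).
  - apply ex_derive_id.
  - apply (ex_derive_div (fun y => 1 - F y) f).
    + apply (ex_derive_minus (fun _ => 1) F). apply ex_derive_const. eexists; apply HFd, Hv.
    + apply Hf2, Hv.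
    + specialize (Hfpos v Hv); lra.
Qed.

Lemma psi_cont F f v : cdf_with_C2_density F f -> 0 < v < 1 -> continuity_pt (psi F f) v.
Proof.
  intros H Hv. apply continuity_pt_filterlim. apply (@ex_derive_continuous R_AbsRing R_NormedModule). apply psi_ex; auto.
Qed.

Lemma psi_incr F f a b : cdf_with_C2_density F f ->
  (forall v, 0 < v < 1 -> 0 < psi F f v -> 0 < Derive (psi F f) v) ->
  0 < a -> a < b -> b < 1 -> 0 < psi F f a -> psi F f a < psi F f b.
Proof.
  intros H Hpsi Ha Hab Hb Hpa.
  assert (loc : forall m, 0 < m < 1 -> 0 < psi F f m -> exists d, 0 < d /\
     forall h, 0 < h < d -> psi F f m < psi F f (m + h)).
  { intros m Hm Hpm. destruct (LP (psi F f) m (Derive (psi F f) m)) as [d [Hd Hd2]].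
    - apply Derive_correct, psi_ex; auto.
    - apply Hpsi; auto.
    - exists d; split; auto. intros h Hh; apply Hd2; auto. }
  destruct (continuity_ab_maj (psi F f) a b) as [M [HM HMab]]; [lra| |].
  { intros; apply psi_cont; auto; lra. }
  destruct (Req_dec M b) as [->|HMb].
  - destruct (loc a) as [d [Hd Hd2]]; [lra|auto|].
    set (h := Rmin (d/2) (b - a)).
    assert (h <= d/2) by (unfold h; apply Rmin_l).
    assert (h <= b - a) by (unfold h; apply Rmin_r).
    assert (0 < h) by (unfold h; apply Rmin_pos; lra).
    assert (Hh : 0 < h < d) by lra.
    specialize (Hd2 h Hh). assert (Hi : a <= a + h <= b) by lra. specialize (HM (a + h) Hi). lra.
  - assert (HMa : psi F f a <= psi F f M) by (apply HM; lra).
    destruct (loc M) as [d [Hd Hd2]]; [lra|lra|].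
    set (h := Rmin (d/2) (b - M)).
    assert (h <= d/2) by (unfold h; apply Rmin_l).
    assert (h <= b - M) by (unfold h; apply Rmin_r).
    assert (0 < h) by (unfold h; apply Rmin_pos; lra).
    assert (Hh : 0 < h < d) by lra.
    specialize (Hd2 h Hh). assert (Hi : a <= M + h <= b) by lra. specialize (HM (M + h) Hi). lra.
Qed.

Lemma char F f c q P : cdf_with_C2_density F f -> 0 < c -> c < q ->
  unique_maximizer F c q P -> 0 < P / q < 1 /\ psi F f (P / q) = c / q.
Proof.
  intros H Hc Hcq [Hmax _].
  pose proof H as [HF0 [HF1 [HFc [HFd [Hfpos Hf2]]]]].
  assert (Hmid : 0 < profit F c q ((c + q) / 2)).
  { unfold profit. apply Rmult_lt_0_compat; [lra|].
    assert (F ((c + q) / 2 / q) < 1).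
    { apply (F_lt1 F f); auto. split.
      - apply Rdiv_lt_0_compat; lra.
      - apply (Rmult_lt_reg_r q); [lra|]. unfold Rdiv. rewrite Rmult_assoc, Rinv_l by lra. lra. }
    lra. }
  pose proof (Hmax ((c + q) / 2)) as HP.
  assert (Hpos : 0 < profit F c q P) by lra.
  assert (Hv : 0 < P / q < 1).
  { destruct (Rle_lt_dec 1 (P / q)) as [h1|h1].
    - unfold profit in Hpos. rewrite HF1 in Hpos by lra. lra.
    - destruct (Rle_lt_dec (P / q) 0) as [h0|h0]; [|lra].
      unfold profit in Hpos. rewrite HF0 in Hpos by lra.
      assert (P <= 0).
      { assert (P = P / q * q) by (field; lra). 
        assert (P / q * q <= 0) by (apply Rmult_le_0_r; lra). lra. }
      lra. }
  split; [exact Hv|].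
  set (v := P / q) in *.
  set (D := (1 - F v) - (P - c) * (f v / q)).
  assert (Hd : is_derive (profit F c q) P D).
  { unfold profit, D, v. auto_derive.
    - exists (f (P/q)). exact (HFd (P/q) Hv).
    - replace (Derive (fun x => F x) (P * / q)) with (f (P/q)).
      + unfold Rdiv. ring.
      + symmetry; apply is_derive_unique; exact (HFd _ Hv). }
  assert (HD : D = 0).
  { destruct (Rtotal_order D 0) as [h|[h|h]]; auto.
    - apply is_derive_opp in Hd.
      destruct (LP _ _ _ Hd) as [d [Hd0 Hd1]].
      { simpl. unfold opp; simpl. lra. }
      destruct (Hd1 (d/2)) as [_ X]; [lra|].
      specialize (Hmax (P - d/2)). unfold opp in X; simpl in X. lra.
    - destruct (LP _ _ _ Hd h) as [d [Hd0 Hd1]].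
      destruct (Hd1 (d/2)) as [X _]; [lra|].
      specialize (Hmax (P + d/2)). lra. }
  assert (0 < f v) by (apply Hfpos; exact Hv).
  unfold psi, r_fun.
  assert (E : 1 - F v = (P - c) * (f v / q)) by (unfold D in HD; lra).
  rewrite E. unfold v in *. field. split; lra.
Qed.

Theorem lemma1 (ql qh c : R) (F f : R -> R) (p : R -> R) :
  0 < ql -> ql < qh -> 0 < c -> c < ql ->
  cdf_with_C2_density F f ->
  (forall v, 0 < v < 1 -> 0 < psi F f v -> 0 < Derive (psi F f) v) ->
  (forall q, c < q -> unique_maximizer F c q (p q)) ->
  forall q, ql <= q <= qh ->
    ex_derive (fun t => p t / t) q /\ Derive (fun t => p t / t) q < 0.
Proof.
  intros Hql Hqlh Hc Hcql H Hpsi Hmax q0 Hq0.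
  set (Phi := fun t => p t / t).
  set (ps := psi F f).
  assert (Hch : forall t, c < t -> 0 < Phi t < 1 /\ ps (Phi t) = c / t).
  { intros t Ht. apply (char F f c t (p t)); auto. }
  assert (Hq0c : c < q0) by lra.
  set (v0 := Phi q0).
  destruct (Hch q0 Hq0c) as [Hv0 Hpv0]. fold v0 in Hv0, Hpv0.
  set (l := Derive ps v0).
  assert (Hcq0 : 0 < c / q0) by (apply Rdiv_lt_0_compat; lra).
  assert (Hl : 0 < l) by (apply Hpsi; auto; unfold ps in Hpv0; lra).
  assert (Hdl : is_derive ps v0 l) by (apply Derive_correct, psi_ex; auto).
  assert (Hinc : forall a b, 0 < a -> a < b -> b < 1 -> 0 < ps a -> ps a < ps b).
  { intros; apply psi_incr; auto. }
  assert (HcontPhi : continuity_pt Phi q0).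
  { unfold continuity_pt, continue_in, limit1_in, limit_in. simpl. unfold R_dist, D_x, no_cond.
    intros eps Heps.
    set (e := Rmin eps (Rmin (v0/2) ((1-v0)/2))).
    assert (He1 : e <= eps) by (unfold e; apply Rmin_l).
    assert (He2 : e <= v0/2) by (unfold e; eapply Rle_trans; [apply Rmin_r|apply Rmin_l]).
    assert (He3 : e <= (1-v0)/2) by (unfold e; eapply Rle_trans; [apply Rmin_r|apply Rmin_r]).
    assert (He0 : 0 < e) by (unfold e; repeat apply Rmin_pos; lra).
    assert (HA : c / q0 < ps (v0 + e)) by (rewrite <- Hpv0; apply Hinc; lra).
    assert (HB : ps (v0 - e) < c / q0).
    { destruct (Rle_lt_dec (ps (v0 - e)) 0) as [h|h]; [lra|].
      rewrite <- Hpv0; apply Hinc; lra. }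
    assert (Hg : continuity_pt (fun t => c / t) q0).
    { apply continuity_pt_filterlim. apply (@ex_derive_continuous R_AbsRing R_NormedModule).
      auto_derive. lra. }
    unfold continuity_pt, continue_in, limit1_in, limit_in in Hg. simpl in Hg.
    unfold R_dist, D_x, no_cond in Hg.
    destruct (Hg (Rmin (ps (v0 + e) - c / q0) (c / q0 - ps (v0 - e)))) as [d1 [Hd1 Hd1']].
    { apply Rmin_pos; lra. }
    exists (Rmin d1 (q0 - c)). split; [apply Rmin_pos; lra|].
    intros x [[_ Hx0] Hx].
    assert (Hxd1 : Rabs (x - q0) < d1) by (eapply Rlt_le_trans; [exact Hx|apply Rmin_l]).
    assert (Hxd2 : Rabs (x - q0) < q0 - c) by (eapply Rlt_le_trans; [exact Hx|apply Rmin_r]).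
    apply Rabs_def2 in Hxd2.
    assert (Hxc : c < x) by lra.
    destruct (Hch x Hxc) as [Hvx Hpx].
    assert (Hcx : Rabs (c / x - c / q0) < Rmin (ps (v0 + e) - c / q0) (c / q0 - ps (v0 - e))).
    { apply Hd1'. split; [split; auto|exact Hxd1]. }
    apply Rabs_def2 in Hcx. destruct Hcx as [Hcx1 Hcx2].
    assert (Hm1 := Rmin_l (ps (v0 + e) - c / q0) (c / q0 - ps (v0 - e))).
    assert (Hm2 := Rmin_r (ps (v0 + e) - c / q0) (c / q0 - ps (v0 - e))).
    assert (Hcxpos : 0 < c / x) by (apply Rdiv_lt_0_compat; lra).
    fold v0.
    apply Rabs_def1.
    + destruct (Rle_lt_dec (Phi x) (v0 + e)) as [h|h].
      * destruct (Req_dec (Phi x) (v0 + e)) as [h'|h'].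
        -- rewrite h' in Hpx. lra.
        -- lra.
      * assert (ps (v0 + e) < ps (Phi x)) by (apply Hinc; lra). lra.
    + destruct (Rle_lt_dec (v0 - e) (Phi x)) as [h|h].
      * destruct (Req_dec (Phi x) (v0 - e)) as [h'|h'].
        -- rewrite h' in Hpx. lra.
        -- lra.
      * assert (ps (Phi x) < ps (v0 - e)) by (apply Hinc; lra). lra.
  }
  set (h := fun v => if Req_EM_T v v0 then l else (ps v - ps v0) / (v - v0)).
  assert (Hh0 : h v0 = l) by (unfold h; destruct (Req_EM_T v0 v0); [auto|contradiction]).
  assert (Hhc : continuity_pt h v0).
  { unfold continuity_pt, continue_in, limit1_in, limit_in. simpl. unfold R_dist, D_x, no_cond.
    intros eps Heps. apply is_derive_Reals in Hdl.
    destruct (Hdl eps Heps) as [d Hd].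
    exists d. split; [apply cond_pos|].
    intros x [[_ Hx0] Hx]. rewrite Hh0.
    unfold h. destruct (Req_EM_T x v0) as [e|_]; [subst; contradiction|].
    specialize (Hd (x - v0) ltac:(lra) Hx).
    replace (v0 + (x - v0)) with x in Hd by ring. exact Hd. }
  set (G := fun t => - c / (q0 * (q0 + t) * h (Phi (q0 + t)))).
  assert (HG0 : G 0 = - c / (q0 * q0 * l)).
  { unfold G. replace (q0 + 0) with q0 by ring. fold v0. rewrite Hh0. reflexivity. }
  assert (HGc : continuity_pt G 0).
  { unfold G.
    apply (continuity_pt_div (fun _ => - c) (fun t => q0 * (q0 + t) * h (Phi (q0 + t)))).
    - apply continuity_pt_const. intros x y; reflexivity.
    - apply (continuity_pt_mult (fun t => q0 * (q0 + t)) (fun t => h (Phi (q0 + t)))).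
      + apply (continuity_pt_mult (fun _ => q0) (fun t => q0 + t)).
        * apply continuity_pt_const. intros x y; reflexivity.
        * apply (continuity_pt_plus (fun _ => q0) (fun t => t)).
          -- apply continuity_pt_const. intros x y; reflexivity.
          -- apply derivable_continuous_pt, derivable_pt_id.
      + apply (continuity_pt_comp (fun t => Phi (q0 + t)) h).
        * apply (continuity_pt_comp (fun t => q0 + t) Phi).
          -- apply (continuity_pt_plus (fun _ => q0) (fun t => t)).
             ++ apply continuity_pt_const. intros x y; reflexivity.
             ++ apply derivable_continuous_pt, derivable_pt_id.
          -- replace (q0 + 0) with q0 by ring. exact HcontPhi.
        * replace (q0 + 0) with q0 by ring. fold v0. exact Hhc.
    - replace (q0 + 0) with q0 by ring. fold v0. rewrite Hh0.
      apply Rgt_not_eq. apply Rmult_lt_0_compat; [apply Rmult_lt_0_compat|]; lra. }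
  assert (Hid : forall t, t <> 0 -> Rabs t < q0 - c -> (Phi (q0 + t) - Phi q0) / t = G t).
  { intros t Ht0 Ht. apply Rabs_def2 in Ht.
    destruct (Hch (q0 + t) ltac:(lra)) as [Hw Hpw].
    set (w := Phi (q0 + t)) in *. fold v0.
    assert (Hne : w <> v0).
    { intros E. rewrite E in Hpw. rewrite Hpw in Hpv0.
      assert (c * q0 = c * (q0 + t)).
      { apply (Rmult_eq_reg_r (/ (q0 * (q0 + t)))).
        - transitivity (c / (q0 + t)); [field; lra|].
          rewrite Hpv0. field; lra.
        - apply Rinv_neq_0_compat. apply Rgt_not_eq, Rmult_lt_0_compat; lra. }
      assert (c * t = 0) by lra.
      apply Rmult_integral in H1. lra. }
    unfold G. fold w.
    unfold h. destruct (Req_EM_T w v0) as [e|_]; [contradiction|].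
    rewrite Hpw, Hpv0.
    assert (w - v0 <> 0) by lra.
    field. repeat split; try lra.
    intro E. assert (E2 : c * t = 0) by lra.
    apply Rmult_integral in E2. lra. }
  set (L := - c / (q0 * q0 * l)).
  assert (HL : derivable_pt_lim Phi q0 L).
  { intros eps Heps.
    unfold continuity_pt, continue_in, limit1_in, limit_in in HGc. simpl in HGc.
    unfold R_dist, D_x, no_cond in HGc.
    destruct (HGc eps Heps) as [d1 [Hd1 Hd1']].
    assert (Hpos : 0 < Rmin d1 (q0 - c)) by (apply Rmin_pos; lra).
    exists (mkposreal _ Hpos). simpl. intros t Ht0 Ht.
    assert (Ht1 : Rabs t < d1) by (eapply Rlt_le_trans; [exact Ht|apply Rmin_l]).
    assert (Ht2 : Rabs t < q0 - c) by (eapply Rlt_le_trans; [exact Ht|apply Rmin_r]).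
    rewrite Hid by assumption. unfold L. rewrite <- HG0.
    apply Hd1'. split; [split; auto|]. rewrite Rminus_0_r. exact Ht1. }
  assert (HL' : is_derive Phi q0 L) by (apply is_derive_Reals; exact HL).
  split.
  - exists L. exact HL'.
  - rewrite (is_derive_unique _ _ _ HL').
    assert (0 < c / (q0 * q0 * l)).
    { apply Rdiv_lt_0_compat; [lra|]. apply Rmult_lt_0_compat; [apply Rmult_lt_0_compat|]; lra. }
    unfold L. replace (- c / (q0 * q0 * l)) with (- (c / (q0 * q0 * l))) by (field; repeat split; lra).
    lra.
Qed.
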